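(* Let $(\Gamma,x)\subset\Sigma$, $\lambda$, $\mathit{KW}=\mathit{KW}(\Gamma,x)$ (trivial cochain), $a_e,\beta_e,R$, and the map $S$ be as in the context. Fix $F\in\mathbb C^\diamondsuit$ and a vertex $v$ of $\Gamma$. Then $f=S(F)$ satisfies $(\mathit{KW}f)(\bar e)=0$ for all $e\in\mathbb E_v$ if and only if, for all $e\in\mathbb E_v$, writing $e'=R(e)$, \[ \Pr\left(F(z_e);\,i\exp\left(-\tfrac i2(a_e+\theta_e)\right)\right)=\Pr\left(F(z_{e'});\,i\exp\left(-\tfrac i2(a_{e'}-\theta_{e'})\right)\right)\exp\left(\tfrac i2(\beta_e-\theta_e-\theta_{e'})\right). \]
   Context: Let $\Sigma$ be a closed connected oriented surface with a Riemannian metric, $\Gamma\subset\Sigma$ a finite connected graph with smoothly embedded edges whose faces are discs, with edge weights $x_e=\tan(\theta_e/2)\in[0,1]$, $\theta_e\in[0,\pi/2]$. $\mathbb E$ is the set of oriented edges (origin $o(e)$, terminus $t(e)$, reversal $\bar e$); $z_e=z_{\bar e}$ is the midpoint of the edge, $\diamondsuit=\{z_e\}$ the set of midpoints, $x_e=x_{\bar e}$, $\theta_e=\theta_{\bar e}$; $\mathbb E_v$ is the set of oriented edges with origin $v$. Fix a vector field $\lambda$ with isolated zeros of even index in $\Sigma\setminus\Gamma$. For $o(e')=t(e)$, $e'\neq\bar e$, $\alpha_\lambda(e,e')$ is the rotation angle relative to $\lambda$ of the velocity along $e$ from $z_e$ to $t(e)$ then $e'$ from $o(e')$ to $z_{e'}$.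 $(\mathit{KW}f)(e)=f(e)-x_e\sum_{e'\in\mathbb E_{t(e)},e'\ne\bar e}\exp(\tfrac i2\alpha_\lambda(e,e'))f(e')$ on $\mathbb C^{\mathbb E}$. $a_e$ is the oriented angle at $z_e$ from $\lambda(z_e)$ to the direction of $e$; for $e\in\mathbb E_v$, $R(e)$ is the next element of $\mathbb E_v$ counterclockwise, and $\beta_e=\pi+\alpha_\lambda(\bar e,R(e))$. For $u\in\mathbb C^*$, $\Pr(\cdot\,;u)$ is the orthogonal projection of $\mathbb C$ onto the real line $u\mathbb R$. Let $\ell(e)=\exp(-\tfrac i2a_e)\mathbb R$ and define the $\mathbb R$-linear map $S\colon\mathbb C^\diamondsuit\to\mathbb C^{\mathbb E}$, $(SF)(e)=\sin(\theta_e/2)\Pr(F(z_e);\ell(e))$. *)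

(* Defs.v *)
From mathcomp Require Import all_boot all_order all_algebra.
From mathcomp Require Import complex.
From mathcomp Require Import reals trigo.
Set Implicit Arguments. Unset Strict Implicit. Unset Printing Implicit Defensive.
Import GRing.Theory Num.Theory.
Local Open Scope ring_scope.
Local Open Scope complex_scope.

(* Local model of the configuration around the vertex v.
   The index type I stands for E_v (oriented edges with origin v), D for the
   set of midpoints, z : I -> D maps e to z_e.  Angles are measured w.r.t. the
   (nonvanishing near v) vector field lambda:
     phi e : oriented angle at v from lambda(v) to the tangent of e at v;
     w e   : rotation angle (rel. lambda) of the velocity along e from v to z_e. *)

Section Defs.
Variable R : realType.

Definition congr2pi (x y : R) : Prop := exists k : int, x = y + k%:~R * (2 * pi).

Definition cis (t : R) : R[i] := cos t +i* sin t.

Definition Pr (z u : R[i]) : R[i] :=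
  (complex.Re (z * u^*) / complex.Re (u * u^*))%:C * u.

Definition ccw_gap (I : Type) (phi : I -> R) (e e' : I) (t : R) : Prop :=
  0 < t < 2 * pi /\ congr2pi (phi e') (phi e + t).

Definition is_ccw_next (I : eqType) (phi : I -> R) (e e' : I) : Prop :=
  e' != e /\
  exists t, ccw_gap phi e e' t /\
    forall e'' t'', e'' != e -> ccw_gap phi e e'' t'' -> t <= t''.

(* r = alpha_lambda(ebar, e') for e, e' in E_v, e' <> e: rotation along ebar
   from z_e to v (which is - w e), plus the turning angle at the corner v
   (the representative in (-pi, pi) of the angle from the incoming direction
   phi e + pi to the outgoing direction phi e'), plus the rotation along e'
   from v to z_e' (which is w e'). *)
Definition is_rot_angle (I : Type) (phi w : I -> R) (e e' : I) (r : R) : Prop :=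
  exists tau, - pi < tau < pi /\ congr2pi tau (phi e' - (phi e + pi)) /\
    r = - w e + tau + w e'.

(* f = S(F): f(e) = sin(theta_e/2) Pr(F(z_e); exp(-i a_e/2) R); for the
   reversed edge ebar, a_ebar = a_e + pi. *)
Definition Sf (I D : Type) (z : I -> D) (a theta : I -> R) (F : D -> R[i])
  (e : I) : R[i] :=
  (sin (theta e / 2))%:C * Pr (F (z e)) (cis (- (a e / 2))).

Definition Sf_bar (I D : Type) (z : I -> D) (a theta : I -> R) (F : D -> R[i])
  (e : I) : R[i] :=
  (sin (theta e / 2))%:C * Pr (F (z e)) (cis (- ((a e + pi) / 2))).

(* (KW f)(ebar) for e in E_v, where f = S(F) and x_e = tan(theta_e/2). *)
Definition KW_bar (I D : finType) (z : I -> D) (a theta : I -> R)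
  (alpha : I -> I -> R) (F : D -> R[i]) (e : I) : R[i] :=
  Sf_bar z a theta F e -
  (tan (theta e / 2))%:C *
    \sum_(e' in I | e' != e) cis (alpha e e' / 2) * Sf z a theta F e'.

End Defs.

(* Main.v *)
Set Warnings "-notation-overridden,-ambiguous-paths".
Require Import Defs.
From mathcomp Require Import all_boot all_order all_algebra.
From mathcomp Require Import complex.
From mathcomp Require Import reals trigo.
From mathcomp Require Import lra ring zify.
Import Order.TTheory GRing.Theory Num.Theory.
Local Open Scope ring_scope.
Local Open Scope complex_scope.
Section T.
Variable R : realType.
Implicit Types x y t : R.

Lemma ceq (a b c d : R) : a = c -> b = d -> a +i* b = c +i* d.
Proof. by move=> -> ->. Qed.

Lemma cisD x y : cis (x + y) = cis x * cis y.
Proof. by rewrite /cis sinD cosD /=; apply: ceq; ring. Qed.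

Lemma cis_pi : cis (pi : R) = -1.
Proof. by rewrite /cis cospi sinpi /=; apply: ceq; rewrite ?oppr0. Qed.

Lemma cis_neq0 t : cis t != 0.
Proof.
rewrite /cis; apply/eqP => /(congr1 (fun z : R[i] => complex.Re z ^+ 2 + complex.Im z ^+ 2)).
by rewrite /= cos2Dsin2 expr0n /= addr0; apply/eqP; rewrite oner_eq0.
Qed.

Definition co (z : R[i]) t := complex.Re z * cos t + complex.Im z * sin t.

Lemma Pr_cis z t : Pr z (cis t) = (co z t)%:C * cis t.
Proof.
case: z => z1 z2; rewrite /Pr /co /cis /=.
have -> : cos t * cos t - sin t * - sin t = 1.
  by rewrite -(cos2Dsin2 t); ring.
by rewrite divr1; congr (_%:C * _); ring.
Qed.

Lemma Pr_opp (z u : R[i]) : Pr z (-u) = Pr z u.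
Proof.
case: z => z1 z2; case: u => u1 u2; rewrite /Pr /=.
have -> : (z1 * - u1 - z2 * - - u2) = -(z1*u1 - z2 * - u2) by ring.
have -> : (- u1 * - u1 - - u2 * - - u2) = (u1*u1 - u2 * - u2) by ring.
by rewrite mulNr rmorphN mulNr mulrN opprK.
Qed.

Lemma Pr_sign (z u : R[i]) (s : R[i]) : s = 1 \/ s = -1 -> Pr z (s * u) = Pr z u.
Proof. by case=> ->; rewrite ?mul1r // mulN1r Pr_opp. Qed.

Lemma cis_addpi y : cis (y + pi) = - cis y.
Proof. by rewrite cisD cis_pi mulrN1. Qed.

Lemma cis_nat_pi y (n : nat) : (cis (y + n%:R * pi) = cis y \/ cis (y + n%:R * pi) = - cis y) /\
   (cis (y - n%:R * pi) = cis y \/ cis (y - n%:R * pi) = - cis y).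
Proof.
elim: n => [|n [IH1 IH2]]; first by rewrite mul0r addr0 subr0; split; left.
have e1 : y + n.+1%:R * pi = (y + n%:R * pi) + pi by rewrite -natr1; ring.
have e2 : y - n%:R * pi = (y - n.+1%:R * pi) + pi by rewrite -natr1; ring.
rewrite e1 cis_addpi; split.
  by case: IH1 => ->; [right|left; rewrite opprK].
move: IH2; rewrite e2 cis_addpi => -[] E.
  by right; rewrite -E opprK.
by left; move/eqP: E; rewrite eqr_opp => /eqP.
Qed.

Lemma cis_sign y y' (n : int) : y = y' + n%:~R * pi ->
  exists s : R[i], (s = 1 \/ s = -1) /\ cis y = s * cis y'.
Proof.
move=> ->; case: n => n.
  have [[E|E] _] := cis_nat_pi y' n; rewrite E.
    by exists 1; rewrite mul1r; split; [left|].
  by exists (-1); rewrite mulN1r; split; [right|].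
rewrite NegzE mulrNz mulNr.
have [_ [E|E]] := cis_nat_pi y' n.+1; rewrite (_ : n.+1%:~R = n.+1%:R :> R) // E.
  by exists 1; rewrite mul1r; split; [left|].
by exists (-1); rewrite mulN1r; split; [right|].
Qed.

Lemma pi2_gt0 : 0 < 2 * (pi : R).
Proof. by rewrite mulr_gt0 ?pi_gt0. Qed.

Lemma congr_eq (a b : R) : congr2pi a b -> - (2 * pi) < a - b < 2 * pi -> a = b.
Proof.
move=> [k E] /andP [h1 h2].
have pp := @pi_gt0 R.
have k1 : (k%:~R : R) < 1.
  have : (k%:~R - 1) * pi < 0 :> R by lra.
  by rewrite pmulr_llt0 // subr_lt0.
have k2 : ((-k)%:~R : R) < 1.
  have : ((-k)%:~R - 1) * pi < 0 :> R by rewrite rmorphN /=; lra.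
  by rewrite pmulr_llt0 // subr_lt0.
rewrite ltrz1 in k1; rewrite ltrz1 in k2.
have k0 : k = 0 by lia.
by rewrite E k0 mul0r addr0.
Qed.

Lemma congr_gap (a b t t' : R) : congr2pi a (b + t) -> congr2pi a (b + t') ->
  0 < t < 2 * pi -> 0 < t' < 2 * pi -> t = t'.
Proof.
move=> [k1 E1] [k2 E2] /andP [h1 h2] /andP [h3 h4]; apply: congr_eq.
  exists (k2 - k1); rewrite rmorphB /=; lra.
apply/andP; split; lra.
Qed.


Lemma cis_pihalf : cis (pi / 2 : R) = 'i.
Proof. by rewrite /cis cos_pihalf sin_pihalf. Qed.

Lemma cis_i y : 'i * cis y = cis (y + pi / 2).
Proof.
rewrite /cis cosDpihalf sinDpihalf.
change ((0 +i* 1) * (cos y +i* sin y) = - sin y +i* cos y).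
by rewrite /=; apply: ceq; ring.
Qed.

Lemma co_add (z : R[i]) t f : co z (t + f) = co z t * cos f + co z (t + pi / 2) * sin f.
Proof. rewrite /co !cosD !sinD cos_pihalf sin_pihalf; ring. Qed.

Lemma realC_eq0 (c : R) (u : R[i]) : u != 0 -> (c%:C * u = 0 <-> c = 0).
Proof.
move=> u0; split; last by move=> ->; rewrite mul0r.
move/eqP; rewrite mulf_eq0 (negbTE u0) orbF => /eqP [] //.
Qed.

End T.
Arguments co {R}.
Arguments cis_sign {R}.

Section C.
Variable R : realType.
Variable I : finType.
Variable L : I -> R.
Hypothesis Linj : forall a b, a != b -> L a != L b.

Definition sg (a b : I) : R := if L a < L b then 1 else -1.

Lemma Ltot a b : a != b -> L a < L b \/ L b < L a.
Proof. by move=> /Linj; rewrite neq_lt => /orP. Qed.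

Lemma sg_anti a b : a != b -> sg a b * sg b a = -1.
Proof.
move=> /Ltot; rewrite /sg; case: ltrP => h1; case: ltrP => h2 // [] h; lra.
Qed.

Lemma sg_sq a b : sg a b * sg a b = 1.
Proof. by rewrite /sg; case: ifP => _; rewrite ?mulr1 ?mulrNN ?mulr1. Qed.

Variable Rn : I -> I.
Hypothesis HRn : forall e, Rn e != e.
Hypothesis P2 : forall e x, x != e -> x != Rn e -> sg e x = sg e (Rn e) * sg (Rn e) x.
Variables X Y : I -> R.

Definition At e := X e + Y e + \sum_(x | x != e) sg e x * (X x - Y x).

Lemma At_diff e : At e - sg e (Rn e) * At (Rn e) = 2 * (X e - sg e (Rn e) * Y (Rn e)).
Proof.
set r := Rn e.
have re : r != e := HRn e.
have er : e != r by rewrite eq_sym.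
have E1 : \sum_(x | x != e) sg e x * (X x - Y x) = sg e r * (X r - Y r) + \sum_(i | (i != e) && (i != r)) sg e i * (X i - Y i).
  by rewrite (bigD1 r).
have E2 : \sum_(x | x != r) sg r x * (X x - Y x) = sg r e * (X e - Y e) + \sum_(i | (i != r) && (i != e)) sg r i * (X i - Y i).
  by rewrite (bigD1 e).
rewrite /At E1 E2.
have Hs : \sum_(i | (i != e) && (i != r)) sg e i * (X i - Y i) =
   sg e r * \sum_(i | (i != r) && (i != e)) sg r i * (X i - Y i).
  rewrite mulr_sumr (eq_bigl (fun i => (i != r) && (i != e))) => [|i]; last by rewrite andbC.
  apply: eq_bigr => i /andP [h1 h2]; rewrite (P2 e i h2 h1) -/r; ring.
rewrite Hs.
have A := sg_anti e r er.
have B := sg_sq e r.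
set s1 := sg e r in A B *; set s2 := sg r e in A *.
set S := \sum_(i | _) _.
have -> : s1 * (X r + Y r + (s2 * (X e - Y e) + S)) = s1 * (X r + Y r) + (s1 * s2) * (X e - Y e) + s1 * S by ring.
rewrite A; ring.
Qed.

Lemma Rn_inj : injective Rn.
Proof.
move=> e e' E; apply/eqP; apply: contraT => ne.
set r := Rn e.
have h1 : e' != Rn e by rewrite E eq_sym HRn.
have h2 : e != Rn e' by rewrite -E eq_sym HRn.
have ne' : e' != e by rewrite eq_sym.
have A := P2 e e' ne' h1.
have B := P2 e' e ne h2.
rewrite -E -/r in B.
have h3 : e != r by rewrite eq_sym HRn.
have h4 : e' != r by rewrite /r E eq_sym HRn.
have C : sg e e' * sg e' e = (sg e r * sg r e) * (sg e' r * sg r e') by rewrite A B; ring.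
move: C; rewrite (sg_anti e e' ne) (sg_anti e r h3) (sg_anti e' r h4); lra.
Qed.

Definition rk x := #|[pred y | L y < L x]|.

Lemma rk_lt p x : L p < L x -> (rk p < rk x)%N.
Proof.
move=> h; apply: proper_card; apply/properP; split.
  by apply/subsetP => y; rewrite !inE => hy; apply: lt_trans hy h.
by exists p; rewrite !inE // ltxx.
Qed.

Lemma comb : (forall e, At e = 0) <-> (forall e, X e = sg e (Rn e) * Y (Rn e)).
Proof.
split.
  move=> H e; have := At_diff e; rewrite !H; lra.
move=> H.
have D e : At e = sg e (Rn e) * At (Rn e).
  by apply/eqP; rewrite -subr_eq0 At_diff H subrr mulr0.
move=> e0.
have [m _ Hm] := @arg_maxnP I e0 xpredT rk isT.
have Lm y : L y <= L m.
  rewrite leNgt; apply/negP => /rk_lt h; have /= := Hm y isT; by rewrite leqNgt h.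
have [g Rg gR] := injF_bij Rn_inj.
have claim : forall n x, (rk x < n)%N -> At x = At (Rn m).
  elim=> [//|n IH] x hx.
  set p := g x.
  have Ep : Rn p = x by rewrite /p gR.
  have [pm'|pm] := eqVneq p m; first by rewrite -Ep pm'.
  have xp : x != p by rewrite -Ep HRn.
  have Lpx : L p < L x.
    have px : p != x by rewrite eq_sym.
    have [//|h] := Ltot p x px.
    exfalso.
    have mp : m != p by rewrite eq_sym.
    have mx : m != x.
      apply/eqP => E; move: (Lm p); rewrite E; lra.
    have := P2 p m mp; rewrite Ep => /(_ mx).
    have Lpm : L p < L m by have [//|h'] := Ltot p m pm; move: (Lm p); lra.
    rewrite /sg Lpm.
    have -> : (L p < L x) = false by apply/negbTE; rewrite -leNgt; apply: ltW.
    have -> : L x < L m by apply: lt_trans h Lpm.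
    lra.
  have -> : At x = At p.
    rewrite (D p) Ep /sg Lpx mul1r //.
  apply: IH; have := rk_lt p x Lpx; rewrite -/(rk x); move: hx; rewrite ltnS.
  by move=> a b; apply: leq_trans b a.
have E1 := claim (rk m).+1 m (ltnSn _).
have Lmr : L (Rn m) < L m.
  by have [h|//] := Ltot (Rn m) m (HRn m); move: (Lm (Rn m)); lra.
have E2 := D m; rewrite /sg.
have E3 : sg m (Rn m) = -1 by rewrite /sg ltNge (ltW Lmr).
rewrite E3 E1 in E2.
have Z : At (Rn m) = 0 by lra.
by rewrite (claim (rk e0).+1 e0 (ltnSn _)) Z.
Qed.

End C.
Arguments At {R I}.
Arguments sg {R I}.

Section Main.
Variable R : realType.
Variables (I D : finType) (z : I -> D)
  (phi w a theta : I -> R) (alpha : I -> I -> R) (Rn : I -> I)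
  (F : D -> R[i]).
Hypothesis Hphi : forall e e' : I, e != e' -> ~ congr2pi (phi e) (phi e').
Hypothesis Hw : forall e : I, congr2pi (a e) (phi e + w e).
Hypothesis Htheta : forall e : I, 0 < theta e <= pi / 2.
Hypothesis Halpha : forall e e' : I, e' != e -> is_rot_angle phi w e e' (alpha e e').
Hypothesis HR : forall e : I, is_ccw_next phi e (Rn e).

Definition Lf e := phi e - (Num.floor (phi e / (2*pi)))%:~R * (2*pi).

Lemma Lf_range e : 0 <= Lf e < 2 * pi.
Proof.
have pp := pi2_gt0 R.
have /andP [h1 h2] := Num.Theory.floor_itv (phi e / (2*pi)).
rewrite ler_pdivlMr // in h1; rewrite ltr_pdivrMr // rmorphD /= in h2.
rewrite /Lf; apply/andP; split; lra.
Qed.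

Lemma Lf_congr e : phi e = Lf e + (Num.floor (phi e / (2*pi)))%:~R * (2*pi).
Proof. by rewrite /Lf subrK. Qed.

Lemma Lf_inj u v : u != v -> Lf u != Lf v.
Proof.
move=> ab; apply/eqP => E; apply: (Hphi u v ab).
exists (Num.floor (phi u / (2*pi)) - Num.floor (phi v / (2*pi))).
rewrite rmorphB /= {1}Lf_congr {1}(Lf_congr v) E; ring.
Qed.

Definition gap e x := if Lf e < Lf x then Lf x - Lf e else Lf x - Lf e + 2 * pi.

Lemma gap_ccw e x : x != e -> ccw_gap phi e x (gap e x).
Proof.
move=> xe.
have /andP [a1 a2] := Lf_range e; have /andP [b1 b2] := Lf_range x.
have ne := Lf_inj x e xe.
have pp := @pi_gt0 R.
rewrite /ccw_gap /gap; case: (ltrP (Lf e) (Lf x)) => h.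
  split; first by apply/andP; split; lra.
  exists (Num.floor (phi x / (2*pi)) - Num.floor (phi e / (2*pi))).
  rewrite rmorphB /= {1}Lf_congr {1}(Lf_congr e); ring.
have h' : Lf x < Lf e by rewrite lt_neqAle ne h.
split; first by apply/andP; split; lra.
exists (Num.floor (phi x / (2*pi)) - Num.floor (phi e / (2*pi)) - 1).
rewrite !rmorphB /= {1}Lf_congr {1}(Lf_congr e); ring.
Qed.


Lemma gap_lt e x : x != e -> x != Rn e -> gap e (Rn e) < gap e x.
Proof.
move=> xe xr.
have [re [t [[tb tc] tmin]]] := HR e.
have [gb gc] := gap_ccw e (Rn e) re.
have [gb' gc'] := gap_ccw e x xe.
have tE : t = gap e (Rn e) := congr_gap _ _ _ _ _ tc gc tb gb.
rewrite -tE lt_neqAle (tmin x _ xe (gap_ccw e x xe)) andbT.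
apply/eqP => E; apply: (Hphi x (Rn e) xr).
case: gc' => k1 E1; case: tc => k2 E2.
exists (k1 - k2); rewrite rmorphB /= E1 E2 E; ring.
Qed.

Definition sgL a b : R := if Lf a < Lf b then 1 else -1.

Lemma P2geo e x : x != e -> x != Rn e -> sgL e x = sgL e (Rn e) * sgL (Rn e) x.
Proof.
move=> xe xr.
have hg := gap_lt e x xe xr.
have re : Rn e != e by case: (HR e).
have rx : Rn e != x by rewrite eq_sym.
have /andP [a1 a2] := Lf_range e; have /andP [b1 b2] := Lf_range x.
have /andP [c1 c2] := Lf_range (Rn e).
have n1 := Lf_inj x e xe; have n2 := Lf_inj _ _ re; have n3 := Lf_inj _ _ rx.
move: hg; rewrite /sgL /gap.
case: (ltrP (Lf e) (Lf x)) => h1; case: (ltrP (Lf e) (Lf (Rn e))) => h2;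
  case: (ltrP (Lf (Rn e)) (Lf x)) => h3 hg; rewrite ?mulr1 ?mul1r ?mulrNN //;
  try (exfalso; move: n1 n2 n3; rewrite !neq_lt => /orP [] ? /orP [] ? /orP [] ?; lra).
Qed.


Lemma alphaE e x : x != e -> alpha e x = - w e + (gap e x - pi) + w x.
Proof.
move=> xe; have [tau [/andP [t1 t2] [tc ->]]] := Halpha e x xe.
congr (_ + _ + _); apply: congr_eq.
  have [_ [k E]] := gap_ccw e x xe; case: tc => k' E'.
  exists (k' + k); rewrite rmorphD /= E' E; ring.
have [/andP [g1 g2] _] := gap_ccw e x xe; apply/andP; split; lra.
Qed.




Definition ue e := - (Lf e + w e) / 2.
Definition Sv e := sin (theta e / 2).
Definition Cv e := cos (theta e / 2).
Definition Pv e := co (F (z e)) (ue e).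
Definition Qv e := co (F (z e)) (ue e + pi / 2).
Definition Xv e := Pv e * Sv e + Qv e * Cv e.
Definition Yv e := Qv e * Cv e - Pv e * Sv e.

Lemma sign e (d : R) : exists s : R[i], (s = 1 \/ s = -1) /\ cis (-((a e + d)/2)) = s * cis (ue e - d/2).
Proof.
have [k Ek] := Hw e.
apply: (cis_sign _ _ (-(k + Num.floor (phi e / (2*pi))))).
rewrite rmorphN rmorphD /= /ue.
have := Lf_congr e; lra.
Qed.

Lemma phase e x : x != e -> cis (alpha e x / 2) * cis (ue x) = (sgL e x)%:C * cis (ue e - pi / 2).
Proof.
move=> xe; rewrite -cisD (alphaE e x xe) /sgL /gap.
case: ifP => _.
  by rewrite rmorph1 mul1r; congr cis; rewrite /ue; lra.
have -> : (- w e + (Lf x - Lf e + 2 * pi - pi) + w x) / 2 + ue x = (ue e - pi/2) + pi.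
  by rewrite /ue; lra.
by rewrite cis_addpi rmorphN1 mulN1r.
Qed.

Lemma Sf_term e x : x != e -> cis (alpha e x / 2) * Sf z a theta F x = (Sv x * Pv x * sgL e x)%:C * cis (ue e - pi/2).
Proof.
move=> xe; rewrite /Sf.
have [s [hs E]] := sign x 0.
rewrite (_ : -(a x / 2) = -((a x + 0) / 2)); last by rewrite addr0.
rewrite E Pr_sign // Pr_cis mul0r subr0.
transitivity ((Sv x * Pv x)%:C * (cis (alpha e x / 2) * cis (ue x))).
  by rewrite /Sv /Pv rmorphM /=; ring.
by rewrite phase // !rmorphM /=; ring.
Qed.

Lemma Sfbar_term e : Sf_bar z a theta F e = (Sv e * - Qv e)%:C * cis (ue e - pi/2).
Proof.
rewrite /Sf_bar; have [s [hs E]] := sign e pi.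
rewrite E Pr_sign // Pr_cis.
have -> : co (F (z e)) (ue e - pi/2) = - Qv e.
  by rewrite co_add cosN sinN cos_pihalf sin_pihalf /Qv; ring.
by rewrite /Sv rmorphM /=; ring.
Qed.

Lemma KW_eq e : KW_bar z a theta alpha F e =
  (Sv e * - Qv e - tan (theta e / 2) * \sum_(x | x != e) Sv x * Pv x * sgL e x)%:C * cis (ue e - pi/2).
Proof.
rewrite /KW_bar Sfbar_term.
rewrite (eq_bigr (fun x => (Sv x * Pv x * sgL e x)%:C * cis (ue e - pi/2))); last first.
  by move=> x /andP [_ xe]; apply: Sf_term.
rewrite -big_distrl /= -rmorph_sum rmorphB !rmorphM /=.
rewrite (eq_bigl (fun x => x != e)) //; ring.
Qed.

Lemma KW_zero e : KW_bar z a theta alpha F e = 0 <-> At Lf Xv Yv e = 0.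
Proof.
have /andP [t1 t2] := Htheta e.
have pp := @pi_gt0 R.
have S0 : 0 < Sv e by rewrite /Sv; apply: sin_gt0_pi; apply/andP; split; lra.
have C0 : 0 < Cv e.
  by rewrite /Cv; apply: cos_gt0_pihalf; apply/andP; split; lra.
rewrite KW_eq realC_eq0 ?cis_neq0 //.
have Es : \sum_(x | x != e) sg Lf e x * (Xv x - Yv x) = 2 * \sum_(x | x != e) Sv x * Pv x * sgL e x.
  rewrite mulr_sumr; apply: eq_bigr => x _; rewrite /Xv /Yv /sg /sgL; set sgn := (if _ then _ else _); ring.
have -> : Sv e * - Qv e - tan (theta e / 2) * \sum_(x | x != e) Sv x * Pv x * sgL e x
   = - (Sv e / Cv e) / 2 * At Lf Xv Yv e.
  rewrite /At Es /tan -/(Sv e) -/(Cv e) /Xv /Yv.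
  field; lra.
split; last by move=> ->; rewrite mulr0.
move/eqP; rewrite mulf_eq0 => /orP [|/eqP //].
rewrite mulf_eq0 oppr_eq0 mulf_eq0 invr_eq0 => /orP [/orP [] |] /eqP h; exfalso; lra.
Qed.

Lemma rel_eq e :
  Pr (F (z e)) ('i * cis (- ((a e + theta e) / 2))) =
     Pr (F (z (Rn e))) ('i * cis (- ((a (Rn e) - theta (Rn e)) / 2))) *
       cis ((pi + alpha e (Rn e) - theta e - theta (Rn e)) / 2)
  <-> Xv e = Yv (Rn e) * sgL e (Rn e).
Proof.
set x := Rn e.
have xe : x != e by rewrite /x; case: (HR e).
have [s [hs E]] := sign e (theta e).
have [s' [hs' E']] := sign x (- theta x).
rewrite E E' mulrCA (Pr_sign _ _ _ _ hs) mulrCA (Pr_sign _ _ _ _ hs') !cis_i !Pr_cis.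
set cx := (co (F (z x)) _)%:C.
have -> : cx * cis (ue x - - theta x / 2 + pi / 2) * cis ((pi + alpha e x - theta e - theta x) / 2)
   = cx * ((cis (alpha e x / 2) * cis (ue x)) * cis (pi - theta e / 2)).
  by rewrite -mulrA -!cisD; congr (_ * cis _); lra.
rewrite phase // -(mulrA _ (cis _)) -cisD /cx.
have -> : ue e - pi / 2 + (pi - theta e / 2) = ue e - theta e / 2 + pi / 2 by lra.
have -> : co (F (z e)) (ue e - theta e / 2 + pi / 2) = Xv e.
  rewrite -addrA co_add cosDpihalf sinDpihalf sinN cosN /Xv /Pv /Qv /Sv /Cv; ring.
have -> : co (F (z x)) (ue x - - theta x / 2 + pi / 2) = Yv x.
  rewrite (_ : ue x - - theta x / 2 + pi / 2 = ue x + (theta x / 2 + pi / 2)); last by lra.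
  rewrite co_add cosDpihalf sinDpihalf /Yv /Pv /Qv /Sv /Cv; ring.
rewrite mulrA -rmorphM /=.
split; last by move=> ->.
move=> /eqP; rewrite -subr_eq0 -mulrBl mulf_eq0 (negbTE (cis_neq0 _ _)) orbF.
by rewrite -rmorphB /= => /eqP [] /eqP; rewrite subr_eq0 => /eqP.
Qed.

Lemma main_equiv :
  (forall e : I, KW_bar z a theta alpha F e = 0) <->
  (forall e : I,
     let e' := Rn e in
     let beta := pi + alpha e e' in
     Pr (F (z e)) ('i * cis (- ((a e + theta e) / 2))) =
     Pr (F (z e')) ('i * cis (- ((a e' - theta e') / 2))) *
       cis ((beta - theta e - theta e') / 2)).
Proof.
have HRn : forall e, Rn e != e by move=> e; case: (HR e).
have C := comb R I Lf Lf_inj Rn HRn P2geo Xv Yv.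
split => H e.
  apply/(rel_eq e); rewrite mulrC; apply: (proj1 C) => e0.
  by apply/(KW_zero e0).
apply/(KW_zero e); apply: (proj2 C) => e0.
by rewrite mulrC; apply/(rel_eq e0); apply: H.
Qed.

End Main.

Theorem proposition4p1 (R : realType) (I D : finType) (z : I -> D)
  (phi w a theta : I -> R) (alpha : I -> I -> R) (Rn : I -> I)
  (F : D -> R[i])
  (Hdeg : (2 <= #|I|)%N)
  (Hphi : forall e e' : I, e != e' -> ~ congr2pi (phi e) (phi e'))
  (Hw : forall e : I, congr2pi (a e) (phi e + w e))
  (Htheta : forall e : I, 0 < theta e <= pi / 2)
  (Halpha : forall e e' : I, e' != e -> is_rot_angle phi w e e' (alpha e e'))
  (HR : forall e : I, is_ccw_next phi e (Rn e)) :
  (forall e : I, KW_bar z a theta alpha F e = 0) <->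
  (forall e : I,
     let e' := Rn e in
     let beta := pi + alpha e e' in
     Pr (F (z e)) ('i * cis (- ((a e + theta e) / 2))) =
     Pr (F (z e')) ('i * cis (- ((a e' - theta e') / 2))) *
       cis ((beta - theta e - theta e') / 2)).

Proof. exact (main_equiv R I D z phi w a theta alpha Rn F Hphi Hw Htheta Halpha HR). Qed.
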